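(* In the triangle $ABC$ with $a=1$ and $b=c=\sqrt{2+\sqrt3}$, the triangle centers $X_5$ and $X_{15}$ coincide.
   Context: $X_n$ denotes the $n$-th triangle center listed in Kimberling's Encyclopedia of Triangle Centers (ETC) ($X_5$ the nine-point center, $X_{15}$ the first isodynamic point), with $a=BC$, $b=CA$, $c=AB$. *)

(* Defs.v *)
From Stdlib Require Import Reals.
Open Scope R_scope.

Definition point := (R * R)%type.

Definition pdist (P Q : point) : R :=
  sqrt ((fst P - fst Q)^2 + (snd P - snd Q)^2).

Definition side_a (A B C : point) := pdist B C.
Definition side_b (A B C : point) := pdist C A.
Definition side_c (A B C : point) := pdist A B.

(* Interior angles, via the law of cosines. *)
Definition angA (A B C : point) : R :=
  let a := side_a A B C in let b := side_b A B C in let c := side_c A B C in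
  acos ((b^2 + c^2 - a^2) / (2 * b * c)).
Definition angB (A B C : point) : R :=
  let a := side_a A B C in let b := side_b A B C in let c := side_c A B C in
  acos ((c^2 + a^2 - b^2) / (2 * c * a)).
Definition angC (A B C : point) : R :=
  let a := side_a A B C in let b := side_b A B C in let c := side_c A B C in
  acos ((a^2 + b^2 - c^2) / (2 * a * b)).

(* The point with (unnormalized) barycentric coordinates u : v : w. *)
Definition from_bary (A B C : point) (u v w : R) : point :=
  let s := u + v + w in
  ((u * fst A + v * fst B + w * fst C) / s,
   (u * snd A + v * snd B + w * snd C) / s).

(* X(5), nine-point center: barycentrics a cos(B - C) : b cos(C - A) : c cos(A - B) (ETC). *)
Definition X5 (A B C : point) : point :=
  let a := side_a A B C in let b := side_b A B C in let c := side_c A B C in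
  let alpha := angA A B C in let beta := angB A B C in let gamma := angC A B C in
  from_bary A B C (a * cos (beta - gamma)) (b * cos (gamma - alpha))
                  (c * cos (alpha - beta)).

(* X(15), first isodynamic point: barycentrics
   a sin(A + pi/3) : b sin(B + pi/3) : c sin(C + pi/3) (ETC). *)
Definition X15 (A B C : point) : point :=
  let a := side_a A B C in let b := side_b A B C in let c := side_c A B C in
  let alpha := angA A B C in let beta := angB A B C in let gamma := angC A B C in
  from_bary A B C (a * sin (alpha + PI/3)) (b * sin (beta + PI/3))
                  (c * sin (gamma + PI/3)).

(* Main.v *)
Require Import Defs.
From Stdlib Require Import Reals Lra.
Open Scope R_scope.

Lemma cos5 : cos (PI/4 + PI/6) = (sqrt 3 - 1) / (2 * sqrt 2).
Proof.
  rewrite cos_plus, cos_PI4, cos_PI6, sin_PI4, sin_PI6.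
  assert (sqrt 2 > 0) by (apply sqrt_lt_R0; lra).
  field; lra.
Qed.

Theorem theorem3p3 (A B C : point) :
  pdist B C = 1 ->
  pdist C A = sqrt (2 + sqrt 3) ->
  pdist A B = sqrt (2 + sqrt 3) ->
  X5 A B C = X15 A B C.
Proof.
  intros Ha Hb Hc.
  assert (h3 : sqrt 3 > 0) by (apply sqrt_lt_R0; lra).
  assert (h2 : sqrt 2 > 0) by (apply sqrt_lt_R0; lra).
  assert (e3 := sqrt_sqrt 3 ltac:(lra)).
  assert (e2 := sqrt_sqrt 2 ltac:(lra)).
  assert (hs : sqrt (2 + sqrt 3) > 0) by (apply sqrt_lt_R0; lra).
  assert (es := sqrt_sqrt (2 + sqrt 3) ltac:(lra)).
  assert (sv : sqrt (2 + sqrt 3) = sqrt 2 * (sqrt 3 + 1) / 2).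
  { apply sqrt_lem_1; try lra.
    - apply Rmult_le_pos; [|lra]. apply Rmult_le_pos; lra.
    - replace (sqrt 2 * (sqrt 3 + 1) / 2 * (sqrt 2 * (sqrt 3 + 1) / 2)) with ((sqrt 2 * sqrt 2) * (sqrt 3 * sqrt 3 + 2 * sqrt 3 + 1) / 4) by field.
      rewrite e2, e3; field. }
  assert (PI > 0) by apply PI_RGT_0.
  assert (hA : angA A B C = PI/6).
  { unfold angA, side_a, side_b, side_c. rewrite Ha, Hb, Hc.
    replace (_ / _) with (cos (PI/6)).
    apply acos_cos; lra.
    rewrite cos_PI6.
    replace (2 * sqrt (2 + sqrt 3) * sqrt (2 + sqrt 3)) with (2*(2+sqrt 3)) by (rewrite Rmult_assoc, es; ring).
    rewrite pow2_sqrt by lra. field_simplify_eq; [nra | lra]. }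
  assert (hB : angB A B C = PI/4 + PI/6).
  { unfold angB, side_a, side_b, side_c. rewrite Ha, Hb, Hc.
    replace (_ / _) with (cos (PI/4 + PI/6)).
    apply acos_cos; lra.
    rewrite cos5, sv. field_simplify_eq; [nra | split; lra]. }
  assert (hC : angC A B C = PI/4 + PI/6).
  { unfold angC, side_a, side_b, side_c. rewrite Ha, Hb, Hc.
    replace (_ / _) with (cos (PI/4 + PI/6)).
    apply acos_cos; lra.
    rewrite cos5, sv. field_simplify_eq; [nra | split; lra]. }
  unfold X5, X15. cbv zeta. rewrite hA, hB, hC.
  replace (PI / 4 + PI / 6 - (PI / 4 + PI / 6)) with 0 by ring.
  replace (PI / 4 + PI / 6 - PI / 6) with (PI/4) by ring.
  replace (PI / 6 - (PI / 4 + PI / 6)) with (- (PI/4)) by ring.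
  replace (PI / 6 + PI / 3) with (PI/2) by field.
  replace (PI / 4 + PI / 6 + PI / 3) with (PI/4 + PI/2) by field.
  rewrite cos_0, cos_neg, sin_PI2, sin_plus, sin_PI2, cos_PI2.
  f_equal; ring.
Qed.
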